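(* Let $I$ be a real interval with $[-1,0]\subseteq I\subseteq\mathbb{R}_-$ and let $f\colon I^n\to\mathbb{R}$ be nonconstant. The following are equivalent: (i) $f$ is a quasi-Lovász extension and there exists $A\subseteq[n]$ with $f_0(-\mathbf{1}_A)\neq0$; (ii) $f$ is comonotonically modular and $f_0$ is weakly homogeneous; (ii') $f$ is invariant under horizontal max-differences and $f_0$ is weakly homogeneous; (iii) there exists a nondecreasing function $\varphi_f\colon I\to\mathbb{R}$ with $\varphi_f(0)=0$ and $\varphi_f(-1)=-1$ such that $f=L^-_f\circ\varphi_f$, i.e. $f(\mathbf{x})=L^-_f(\varphi_f(x_1),\ldots,\varphi_f(x_n))$ for all $\mathbf{x}\in I^n$, where $L^-_f$ denotes the unique Lovász extension $L\colon\mathbb{R}^n\to\mathbb{R}$ satisfying $L(-\mathbf{1}_A)=f(-\mathbf{1}_A)$ for all $A\subseteq[n]$.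
   Context: Notation: $[n]=\{1,\ldots,n\}$; $S_n$ the permutations of $[n]$; $\mathbf{1}_A$ is the indicator tuple of $A\subseteq[n]$, $\mathbf{0}=\mathbf{1}_\varnothing$; for a function $g$, $g_0=g-g(\mathbf{0})$. For $\sigma\in S_n$, $\mathbb{R}^n_\sigma=\{\mathbf{x}: x_{\sigma(1)}\leq\cdots\leq x_{\sigma(n)}\}$, $A^\uparrow_\sigma(i)=\{\sigma(i),\ldots,\sigma(n)\}$, $A^\uparrow_\sigma(n+1)=\varnothing$. The Lovász extension $L_\psi\colon\mathbb{R}^n\to\mathbb{R}$ of $\psi\colon\{0,1\}^n\to\mathbb{R}$ is the function whose restriction to each $\mathbb{R}^n_\sigma$ is the unique affine function agreeing with $\psi$ at the points $\mathbf{1}_{A^\uparrow_\sigma(k)}$, $k\in[n+1]$; a Lovász extension is any such $L_\psi$ (a Lovász extension is uniquely determined by, and can be prescribed arbitrarily through, its values at the points $-\mathbf{1}_A$, $A\subseteq[n]$). A quasi-Lovász extension is $f(\mathbf{x})=L(\varphi(x_1),\ldots,\varphi(x_n))$ with $L$ a Lovász extension and $\varphi\colon I\to\mathbb{R}$ nondecreasing, $\varphi(0)=0$. Comonotonic: $\mathbf{x},\mathbf{x}'\in I^n\cap\mathbb{R}^n_\sigma$ for some $\sigma$. Comonotonically modular: $f(\mathbf{x})+f(\mathbf{x}')=f(\mathbf{x}\wedge\mathbf{x}')+f(\mathbf{x}\vee\mathbf{x}')$ for comonotonic $\mathbf{x},\mathbf{x}'$ ($\wedge,\vee$ componentwise).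 For $c\leq0$, $[\mathbf{x}]^c$ has $i$th component $0$ if $x_i\geq c$ and $x_i$ otherwise, and $\mathbf{x}\vee c$ has components $\max(x_i,c)$; $f$ is invariant under horizontal max-differences if $f(\mathbf{x})-f(\mathbf{x}\vee c)=f([\mathbf{x}]^c)-f([\mathbf{x}]^c\vee c)$ for all $\mathbf{x}\in I^n$, $c\in I$. A function $g\colon I^n\to\mathbb{R}$ ($I\subseteq\mathbb{R}_-$) is weakly homogeneous if there is a nondecreasing $\phi\colon I\to\mathbb{R}$ with $\phi(0)=0$ and $g(x\mathbf{1}_A)=-\phi(x)g(-\mathbf{1}_A)$ for all $x\in I$, $A\subseteq[n]$. *)

(* Defs.v *)
From HB Require Import structures.
From mathcomp Require Import all_boot all_order all_algebra all_fingroup.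
Set Implicit Arguments. Unset Strict Implicit. Unset Printing Implicit Defensive.
Import Order.TTheory GRing.Theory Num.Theory.
Local Open Scope ring_scope.

Section Defs.
Variables (R : realFieldType) (n : nat).

(* vectors of R^n are functions 'I_n -> R; index k : 'I_n stands for k+1 *)
Definition vec := 'I_n -> R.

Definition is_interval (I : R -> Prop) : Prop :=
  forall x y z, I x -> I z -> x <= y -> y <= z -> I y.

Definition in_In (I : R -> Prop) (x : vec) : Prop := forall i, I (x i).

Definition ind (A : {set 'I_n}) : vec := fun i => if i \in A then 1 else 0.
Definition negind (A : {set 'I_n}) : vec := fun i => - ind A i.
Definition zerov : vec := fun _ => 0.

Definition in_sigma (s : 'S_n) (x : vec) : Prop :=
  forall i j : 'I_n, (i <= j)%N -> x (s i) <= x (s j).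

(* A^up_sigma(k+1) = {sigma(k+1),...,sigma(n)} for k = 0..n (k = n gives empty) *)
Definition Aup (s : 'S_n) (k : nat) : {set 'I_n} :=
  [set s i | i : 'I_n & (k <= i)%N].

(* L is the Lovasz extension of psi : {0,1}^n -> R (identified with subsets):
   on each R^n_sigma it coincides with an affine map agreeing with psi at
   the points 1_{A^up_sigma(k)}, k in [n+1]. *)
Definition lovasz_ext_of (psi : {set 'I_n} -> R) (L : vec -> R) : Prop :=
  forall s : 'S_n, exists (a : vec) (c : R),
    (forall x, in_sigma s x -> L x = c + \sum_(i < n) a i * x i) /\
    (forall k, (k <= n)%N -> c + \sum_(i < n) a i * ind (Aup s k) i = psi (Aup s k)).

Definition is_lovasz (L : vec -> R) : Prop := exists psi, lovasz_ext_of psi L.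

Definition nondecr_on (I : R -> Prop) (phi : R -> R) : Prop :=
  forall x y, I x -> I y -> x <= y -> phi x <= phi y.

Definition compv (phi : R -> R) (x : vec) : vec := fun i => phi (x i).

Definition quasi_lovasz (I : R -> Prop) (f : vec -> R) : Prop :=
  exists (L : vec -> R) (phi : R -> R),
    is_lovasz L /\ nondecr_on I phi /\ phi 0 = 0 /\
    forall x, in_In I x -> f x = L (compv phi x).

Definition zeroed (f : vec -> R) : vec -> R := fun x => f x - f zerov.

Definition vmin (x y : vec) : vec := fun i => Num.min (x i) (y i).
Definition vmax (x y : vec) : vec := fun i => Num.max (x i) (y i).

Definition comonotonic (I : R -> Prop) (x y : vec) : Prop :=
  in_In I x /\ in_In I y /\ exists s : 'S_n, in_sigma s x /\ in_sigma s y.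

Definition comon_modular (I : R -> Prop) (f : vec -> R) : Prop :=
  forall x y, comonotonic I x y -> f x + f y = f (vmin x y) + f (vmax x y).

Definition cut (c : R) (x : vec) : vec := fun i => if c <= x i then 0 else x i.
Definition maxc (x : vec) (c : R) : vec := fun i => Num.max (x i) c.

Definition inv_hmaxdiff (I : R -> Prop) (f : vec -> R) : Prop :=
  forall x c, in_In I x -> I c ->
    f x - f (maxc x c) = f (cut c x) - f (maxc (cut c x) c).

Definition scalev (t : R) (x : vec) : vec := fun i => t * x i.

Definition weakly_homogeneous (I : R -> Prop) (g : vec -> R) : Prop :=
  exists phi : R -> R, nondecr_on I phi /\ phi 0 = 0 /\
    forall x (A : {set 'I_n}), I x ->
      g (scalev x (ind A)) = - phi x * g (negind A).

Definition nonconstant_on (I : R -> Prop) (f : vec -> R) : Prop :=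
  exists x y, in_In I x /\ in_In I y /\ f x <> f y.

End Defs.

Arguments ind {R n} A.
Arguments negind {R n} A.
Arguments zerov {R n}.
Arguments Aup {n} s k.

(* Main.v *)
Require Import Defs.
From HB Require Import structures.
From mathcomp Require Import all_boot all_order all_algebra all_fingroup.
From Stdlib Require Import FunctionalExtensionality.
Import Order.TTheory GRing.Theory Num.Theory.
Set Implicit Arguments. Unset Strict Implicit.
Local Open Scope ring_scope.

Section Aux.
Variables (R : realFieldType) (n : nat).
Local Notation vec := (vec R n).

Lemma sort_exists (x : vec) : exists s : 'S_n, in_sigma s x.
Proof.
case: n x => [|m] x.
  by exists 1%g => i; case: i.
pose r := fun i j : 'I_m.+1 => x i <= x j.
have rtot : total r by move=> i j; exact: le_total.
have rtr : transitive r by move=> i j k; exact: le_trans.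
pose ss := sort r (enum 'I_m.+1).
have szs : size ss = m.+1 by rewrite size_sort size_enum_ord.
have us : uniq ss by rewrite sort_uniq enum_uniq.
pose g := fun i : 'I_m.+1 => nth ord0 ss i.
have ginj : injective g.
  move=> i j /eqP; rewrite /g nth_uniq ?szs // => /eqP; exact: val_inj.
exists (perm ginj) => i j lij; rewrite !permE /g.
apply: (sorted_leq_nth rtr) => //; first by move=> k; exact: lexx.
- exact: sort_sorted.
- by rewrite inE szs.
- by rewrite inE szs.
Qed.

Lemma map_sigma (s : 'S_n) (x : vec) (G : R -> R) :
  (forall i j, x i <= x j -> G (x i) <= G (x j)) -> in_sigma s x ->
  in_sigma s (fun i => G (x i)).
Proof. by move=> HG Hs i j lij; apply: HG; apply: Hs. Qed.

Definition aff (s : 'S_n) (g : vec -> R) := exists (a : vec) (c : R),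
  forall x, in_sigma s x -> g x = c + \sum_(i < n) a i * x i.
Definition cone_aff (g : vec -> R) := forall s, aff s g.

Lemma lovasz_aff L : is_lovasz L -> cone_aff L.
Proof. by move=> [psi H] s; have [a [c [H1 _]]] := H s; exists a, c. Qed.

Lemma ind_sigma (s : 'S_n) k : in_sigma s (ind (Aup s k) : vec).
Proof.
move=> i j lij; rewrite /ind /Aup !mem_imset ?inE; last 2 first.
- exact: perm_inj.
- exact: perm_inj.
case: (leqP k i) => ki; first by rewrite (leq_trans ki lij).
by case: ifP => _; rewrite ?lexx ?ler01.
Qed.

Lemma aff_lovasz L : cone_aff L -> is_lovasz L.
Proof.
move=> H; exists (fun B => L (ind B)) => s.
have [a [c Hc]] := H s; exists a, c; split => // k _.
by rewrite Hc //; apply: ind_sigma.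
Qed.

Lemma zero_sigma (s : 'S_n) : in_sigma s (zerov : vec).
Proof. by move=> i j _; rewrite lexx. Qed.

Lemma aff_scale L (lam : R) (v : vec) : cone_aff L -> 0 <= lam ->
  L (scalev lam v) - L zerov = lam * (L v - L zerov).
Proof.
move=> H hl; have [s Hs] := sort_exists v.
have [a [c Hc]] := H s.
have Hs' : in_sigma s (scalev lam v).
  by move=> i j lij; rewrite /scalev ler_wpM2l // Hs.
rewrite !Hc // ?zero_sigma //.
have -> : \sum_(i < n) a i * (zerov : vec) i = 0.
  by rewrite big1 // => i _; rewrite /zerov mulr0.
rewrite /scalev addr0 !(addrC c) !addrK mulr_sumr; apply: eq_bigr => i _.
by rewrite mulrCA.
Qed.

Definition mn (D : {set 'I_n}) (x : vec) : R :=
  match [pick i in D] with Some j => \big[Num.min/x j]_(i in D) x i | None => 0 end.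

Lemma mn_spec (D : {set 'I_n}) (x : vec) j0 : j0 \in D -> (forall i, i \in D -> x j0 <= x i) ->
  mn D x = x j0.
Proof.
move=> Hj0 Hmin; rewrite /mn; case: pickP => [j Hj|]; last by move/(_ j0); rewrite Hj0.
apply/eqP; rewrite eq_le; apply/andP; split.
  by rewrite (bigD1 j0) //= ge_min lexx.
apply: (big_ind (fun v => x j0 <= v)); first exact: Hmin.
  by move=> a b ha hb; rewrite le_min ha hb.
by move=> i /Hmin.
Qed.

Definition w (A : {set 'I_n}) (x : vec) : R :=
  if A == setT then 1 else 1 + mn (~: A) x.

Lemma notT_ex (A : {set 'I_n}) : A != setT -> exists i0, i0 \in ~: A.
Proof.
move=> nT; have /subsetPn [i0 _ Hi0] : ~~ (setT \subset A) by rewrite subTset.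
by exists i0; rewrite inE.
Qed.

Lemma w_aff (A : {set 'I_n}) s : aff s (w A).
Proof.
rewrite /w; case: eqP => [_|/eqP nT].
  exists (fun _ => 0), 1 => x _; rewrite big1 ?addr0 // => i _; by rewrite mul0r.
have [i0 Hi0] := notT_ex nT.
have [j Hj Hmin] := arg_minnP (fun i => ((s^-1)%g i : nat)) Hi0.
exists (fun i => if i == j then 1 else 0), 1 => x Hx.
rewrite (@mn_spec _ _ j) //; last first.
  by move=> i Hi; have := Hx _ _ (Hmin i Hi); rewrite !permKV.
rewrite (bigD1 j) //= eqxx mul1r big1 ?addr0 // => i /negbTE ->; by rewrite mul0r.
Qed.

Lemma w_neg (A B : {set 'I_n}) : w A (negind B) = (B \subset A)%:R.
Proof.
rewrite /w; case: eqP => [->|/eqP nT]; first by rewrite subsetT.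
have [i0 Hi0] := notT_ex nT.
case: (boolP (B \subset A)) => HBA.
  have HnB : forall i, i \in ~: A -> i \notin B.
    move=> i; rewrite inE; apply: contra => /(subsetP HBA); done.
  rewrite (@mn_spec _ _ i0) //.
    by rewrite /negind /ind (negbTE (HnB _ Hi0)) oppr0 addr0.
  by move=> i Hi; rewrite /negind /ind (negbTE (HnB _ Hi0)) (negbTE (HnB _ Hi)).
have /subsetPn [i Hi HiA] := HBA.
rewrite (@mn_spec _ _ i) ?inE //.
  by rewrite /negind /ind Hi addrN.
move=> k _; rewrite /negind /ind Hi; case: ifP => _; first by rewrite lexx.
by rewrite oppr0 lerN10.
Qed.

Fixpoint Mb (psi : {set 'I_n} -> R) k A : R :=
  match k with 0 => psi A | k'.+1 => psi A - \sum_(C : {set 'I_n} | A \proper C) Mb psi k' C end.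

Lemma Mb_stab psi k (A : {set 'I_n}) : (n - #|A| <= k)%N -> Mb psi k.+1 A = Mb psi k A.
Proof.
elim: k A => [|k IH] A hA /=.
  rewrite big_pred0 ?subr0 // => C; apply/negbTE/negP => /proper_card hAC.
  have := max_card C; rewrite card_ord => hC.
  have := leq_trans hAC hC; rewrite ltnNge.
  by move: hA; rewrite leqn0 subn_eq0 => ->.
congr (_ - _); apply: eq_bigr => C /proper_card hAC; apply: IH.
apply: (leq_trans (leq_sub2l n hAC)); rewrite subnS.
by case: (n - #|A|)%N hA.
Qed.

Lemma Mb_sum psi (B : {set 'I_n}) : \sum_(A : {set 'I_n} | B \subset A) Mb psi n A = psi B.
Proof.
rewrite (bigD1 B) ?subxx //= -Mb_stab ?leq_subr //=.
have -> : \sum_(i : {set 'I_n} | (B \subset i) && (i != B)) Mb psi n i =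
          \sum_(i : {set 'I_n} | B \proper i) Mb psi n i.
  by apply: eq_bigl => A; rewrite properEneq eq_sym andbC.
by rewrite subrK.
Qed.

Lemma aff_sum s (r : seq {set 'I_n}) (m : {set 'I_n} -> R) (g : {set 'I_n} -> vec -> R) :
  (forall A, aff s (g A)) -> aff s (fun x => \sum_(A <- r) m A * g A x).
Proof.
move=> Hg; elim: r => [|A r [a [c IH]]].
  exists (fun _ => 0), 0 => x _; rewrite big_nil big1 ?addr0 // => i _; by rewrite mul0r.
have [a1 [c1 H1]] := Hg A.
exists (fun i => m A * a1 i + a i), (m A * c1 + c) => x Hx.
rewrite big_cons H1 // IH // mulrDr mulr_sumr.
have -> : \sum_(i < n) (m A * a1 i + a i) * x i =
          \sum_(i < n) m A * (a1 i * x i) + \sum_(i < n) a i * x i.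
  by rewrite -big_split; apply: eq_bigr => i _; rewrite mulrDl mulrA.
by rewrite !addrA; congr (_ + _); rewrite addrAC.
Qed.

Lemma lovasz_exists (psi : {set 'I_n} -> R) :
  exists L, cone_aff L /\ forall B, L (negind B) = psi B.
Proof.
exists (fun x => \sum_A Mb psi n A * w A x); split.
  move=> s; apply: aff_sum => A; exact: w_aff.
move=> B; rewrite -Mb_sum [RHS]big_mkcond; apply: eq_bigr => A _.
by rewrite w_neg; case: ifP => _; rewrite ?mulr1 ?mulr0.
Qed.
End Aux.

Section Main.
Variables (R : realFieldType) (n : nat) (I : R -> Prop).
Hypothesis hI0 : I 0.
Hypothesis hIm1 : I (-1).
Hypothesis hI2 : forall x : R, I x -> x <= 0.
Local Notation vec := (vec R n).

Lemma cm_ihmd (f : vec -> R) : comon_modular I f -> inv_hmaxdiff I f.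
Proof.
move=> cm x c Hx Hc.
have [s Hs] := sort_exists x.
have cmx : comonotonic I (maxc x c) (cut c x).
  split; [|split].
  - by move=> i; rewrite /maxc; case: lerP.
  - by move=> i; rewrite /cut; case: ifP.
  exists s; split.
  - apply: (map_sigma (G := fun v => Num.max v c)) Hs => i j hij.
    by rewrite ge_max !le_max hij lexx orbT.
  - apply: (map_sigma (G := fun v => if c <= v then 0 else v)) Hs => i j hij.
    case: (boolP (c <= x j)) => hcj; first by case: ifP => // _; exact: hI2.
    have hci : ~~ (c <= x i).
      by apply: contra hcj => hci; exact: le_trans hij.
    by rewrite (negbTE hci).
have := cm _ _ cmx.
have -> : vmin (maxc x c) (cut c x) = x.
  apply: functional_extensionality => i; rewrite /vmin /maxc /cut.
  case: (boolP (c <= x i)) => hci.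
    by rewrite (max_idPl hci); apply/min_idPl; exact: hI2.
  rewrite -ltNge in hci; rewrite (max_idPr (ltW hci)).
  by apply/min_idPr; exact: ltW.
have -> : vmax (maxc x c) (cut c x) = maxc (cut c x) c.
  apply: functional_extensionality => i; rewrite /vmax /maxc /cut.
  case: (boolP (c <= x i)) => hci.
    rewrite (max_idPl hci) (max_idPr (hI2 (Hx i))).
    by apply/esym/max_idPl; exact: hI2.
  by rewrite -ltNge in hci; rewrite (max_idPr (ltW hci)); apply/max_idPl; exact: ltW.
move=> H.
have -> : f x = f (maxc x c) + (f (cut c x) - f (maxc (cut c x) c)).
  by rewrite addrA H addrK.
by rewrite [f (maxc x c) + _]addrC addrK.
Qed.


Lemma recon (h : vec -> R) : inv_hmaxdiff I h ->
  (forall t A, I t -> h (scalev t (ind A)) = 0) -> forall x, in_In I x -> h x = 0.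
Proof.
move=> Hh H0.
suff: forall N (x : vec), (#|[set i | (x i != 0)%R]| <= N)%N -> in_In I x -> h x = 0.
  by move=> H x; apply: (H _ x (leqnn _)).
have Z : forall x : vec, [set i | x i != 0] = set0 -> h x = 0.
  move=> x S0; have -> : x = scalev 0 (ind set0).
    apply: functional_extensionality => i; rewrite /scalev mul0r.
    have : i \notin [set i | x i != 0] by rewrite S0 inE.
    by rewrite inE negbK => /eqP.
  exact: H0.
elim=> [|N IH] x hN Hx.
  by apply: Z; apply/eqP; rewrite -cards_eq0 -leqn0.
case: (set_0Vmem [set i | x i != 0]) => [S0|[j0 Hj0]]; first exact: Z.
case: (Order.TotalTheory.arg_maxP (fun i => x i) Hj0) => j Hj Hmax.
have Hj' : j \in [set i | x i != 0] := Hj.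
have hj0 : x j != 0 by move: Hj'; rewrite inE.
have ht : x j < 0 by rewrite lt_def eq_sym hj0 (hI2 (Hx j)).
have E1 : maxc x (x j) = scalev (x j) (ind [set i | x i != 0]).
  apply: functional_extensionality => i; rewrite /maxc /scalev /ind inE.
  case: (boolP (x i != 0)) => hi.
    rewrite mulr1; apply/max_idPr; apply: (Hmax i).
    by change (i \in [set i | x i != 0]); rewrite inE.
  by rewrite negbK in hi; rewrite (eqP hi) mulr0; apply/max_idPl; exact: ltW.
have E2 : maxc (cut (x j) x) (x j) = scalev (x j) (ind [set i | x i < x j]).
  apply: functional_extensionality => i; rewrite /maxc /cut /scalev /ind inE.
  case: (boolP (x j <= x i)) => hi.
    by rewrite ltNge hi mulr0 /=; apply/max_idPl; exact: ltW.
  have hi' : x i < x j by rewrite ltNge.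
  by rewrite hi' mulr1; apply/max_idPr; exact: ltW.
have := Hh x (x j) Hx (Hx j).
rewrite E1 E2 !H0 ?subr0; try exact: Hx.
move=> ->; apply: IH; last by move=> i; rewrite /cut; case: ifP.
have hp : [set i | cut (x j) x i != 0] \proper [set i | x i != 0].
  apply/properP; split.
    by apply/subsetP => i; rewrite !inE /cut; case: ifP => //; rewrite eqxx.
  by exists j => //; rewrite inE /cut lexx eqxx.
by rewrite -ltnS; exact: leq_trans (proper_card hp) hN.
Qed.

Lemma in_negind A : in_In I (negind A : vec).
Proof. by move=> i; rewrite /negind /ind; case: ifP => _; rewrite ?oppr0. Qed.
Lemma in_scal t A : I t -> in_In I (scalev t (ind A) : vec).
Proof. by move=> Ht i; rewrite /scalev /ind; case: ifP => _; rewrite ?mulr1 ?mulr0. Qed.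
Lemma in_zero : in_In I (zerov : vec).
Proof. by []. Qed.
Lemma in_vmin (x y : vec) : in_In I x -> in_In I y -> in_In I (vmin x y).
Proof. by move=> Hx Hy i; rewrite /vmin; case: lerP. Qed.
Lemma in_vmax (x y : vec) : in_In I x -> in_In I y -> in_In I (vmax x y).
Proof. by move=> Hx Hy i; rewrite /vmax; case: lerP. Qed.

Lemma negind0 : negind set0 = (zerov : vec).
Proof. by apply: functional_extensionality => i; rewrite /negind /ind inE oppr0. Qed.
Lemma scal_neg t A : scalev t (ind A) = scalev (-t) (negind A) :> vec.
Proof. by apply: functional_extensionality => i; rewrite /scalev /negind mulrNN. Qed.
Lemma compv_scal phi t A : phi 0 = 0 ->
  compv phi (scalev t (ind A)) = scalev (phi t) (ind A) :> vec.
Proof.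
move=> p0; apply: functional_extensionality => i; rewrite /compv /scalev /ind.
by case: ifP => _; rewrite ?mulr1 ?mulr0.
Qed.
Lemma compv_neg phi A : phi 0 = 0 ->
  compv phi (negind A) = scalev (phi (-1)) (ind A) :> vec.
Proof.
move=> p0; apply: functional_extensionality => i; rewrite /compv /scalev /negind /ind.
by case: ifP => _; rewrite ?mulr1 ?mulr0 ?oppr0.
Qed.
Lemma compv_zero phi : phi 0 = 0 -> compv phi zerov = (zerov : vec).
Proof. by move=> p0; apply: functional_extensionality => i; rewrite /compv /zerov. Qed.

Lemma L_scal (L : vec -> R) t A : cone_aff L -> t <= 0 ->
  L (scalev t (ind A)) = L zerov + (- t) * (L (negind A) - L zerov).
Proof.
move=> H ht; rewrite scal_neg.
have := @aff_scale R n L (- t) (negind A) H; rewrite oppr_ge0 => /(_ ht) <-.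
by rewrite addrC subrK.
Qed.

Lemma phi_min phi a b : nondecr_on I phi -> I a -> I b ->
  phi (Num.min a b) = Num.min (phi a) (phi b).
Proof.
move=> Hp Ha Hb; case: (lerP a b) => hab.
  by apply/esym/min_idPl; apply: Hp.
by apply/esym/min_idPr; apply: Hp => //; exact: ltW.
Qed.
Lemma phi_max phi a b : nondecr_on I phi -> I a -> I b ->
  phi (Num.max a b) = Num.max (phi a) (phi b).
Proof.
move=> Hp Ha Hb; case: (lerP a b) => hab.
  by apply/esym/max_idPr; apply: Hp.
by apply/esym/max_idPl; apply: Hp => //; exact: ltW.
Qed.

Lemma cm_comp (L : vec -> R) phi : cone_aff L -> nondecr_on I phi ->
  comon_modular I (fun x => L (compv phi x)).
Proof.
move=> HL Hp x y [Hx [Hy [s [Hsx Hsy]]]].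
have Su : in_sigma s (compv phi x).
  move=> i j hij; apply: Hp => //; exact: Hsx.
have Sv : in_sigma s (compv phi y).
  move=> i j hij; apply: Hp => //; exact: Hsy.
have -> : compv phi (vmin x y) = vmin (compv phi x) (compv phi y).
  by apply: functional_extensionality => i; rewrite /compv /vmin phi_min.
have -> : compv phi (vmax x y) = vmax (compv phi x) (compv phi y).
  by apply: functional_extensionality => i; rewrite /compv /vmax phi_max.
have [a [c Hc]] := HL s.
have Smax : in_sigma s (vmax (compv phi x) (compv phi y)).
  by move=> i j hij; rewrite /vmax ge_max !le_max (Su _ _ hij) (Sv _ _ hij) orbT.
have Smin : in_sigma s (vmin (compv phi x) (compv phi y)).
  by move=> i j hij; rewrite /vmin le_min !ge_min (Su _ _ hij) (Sv _ _ hij) orbT.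
rewrite (Hc _ Su) (Hc _ Sv) (Hc _ Smin) (Hc _ Smax).
rewrite addrACA [in RHS]addrACA -!big_split /=; congr (_ + _).
by apply: eq_bigr => i _; rewrite -!mulrDr /vmin /vmax addr_min_max.
Qed.

Lemma ihmd_diff (f g : vec -> R) : inv_hmaxdiff I f -> inv_hmaxdiff I g ->
  inv_hmaxdiff I (fun x => f x - g x).
Proof.
move=> Hf Hg x c Hx Hc.
have E : forall a b c d : R, (a - b) - (c - d) = (a - c) - (b - d).
  by move=> a b c' d; rewrite !opprD !opprK addrACA.
by rewrite E Hf // Hg // -E.
Qed.

Lemma ihmd_zeroed (f : vec -> R) : inv_hmaxdiff I f -> inv_hmaxdiff I (zeroed f).
Proof. by move=> Hf; apply: ihmd_diff => // x c _ _; rewrite !subrr. Qed.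

Variable f : vec -> R.
Hypothesis hf : nonconstant_on I f.

Lemma nz_lemma : inv_hmaxdiff I f -> weakly_homogeneous I (zeroed f) ->
  exists A, zeroed f (negind A) <> 0.
Proof.
move=> Hf [phi [Hp [p0 Hw]]].
case: (boolP [exists A, zeroed f (negind A) != 0]).
  by move=> /existsP [A HA]; exists A; apply/eqP.
move=> /existsPn H0; exfalso.
have Z := recon (ihmd_zeroed Hf).
have : forall x, in_In I x -> zeroed f x = 0.
  apply: Z => t A Ht; rewrite Hw //.
  by move: (H0 A); rewrite negbK => /eqP ->; rewrite mulr0.
move=> HZ; case: hf => x [y [Hx [Hy]]]; apply.
move: (HZ x Hx) (HZ y Hy); rewrite /zeroed => /eqP; rewrite subr_eq0 => /eqP ->.
by move/eqP; rewrite subr_eq0 => /eqP ->.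
Qed.


Lemma core phi L : nondecr_on I phi -> phi 0 = 0 -> is_lovasz L ->
  (forall A, L (negind A) = f (negind A)) ->
  (forall x, in_In I x -> f x = L (compv phi x)) ->
  comon_modular I f /\ weakly_homogeneous I (zeroed f).
Proof.
move=> Hp p0 HL HLA Hf; have cL := lovasz_aff HL.
have f0 : f zerov = L zerov by rewrite Hf // compv_zero.
split.
  move=> x y C; have := cm_comp cL Hp C; case: C => Hx [Hy _].
  have H1 := in_vmin Hx Hy; have H2 := in_vmax Hx Hy.
  by rewrite (Hf x) // (Hf y) // (Hf (vmin x y)) // (Hf (vmax x y)).
exists phi; split => //; split => // t A Ht.
have hpt : phi t <= 0 by rewrite -p0; apply: Hp => //; exact: hI2.
rewrite /zeroed (Hf _ (in_scal A Ht)).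
rewrite compv_scal // L_scal // f0 HLA.
by rewrite [L zerov + _]addrC addrK.
Qed.

Lemma i_iii : (quasi_lovasz I f /\ exists A, zeroed f (negind A) <> 0) ->
  exists phi : R -> R,
      nondecr_on I phi /\ phi 0 = 0 /\ phi (-1) = -1 /\
      exists L : vec -> R,
        is_lovasz L /\ (forall A : {set 'I_n}, L (negind A) = f (negind A)) /\
        forall x, in_In I x -> f x = L (compv phi x).
Proof.
move=> [[L [phi [HL [Hp [p0 Hf]]]]] [A HA]].
have cL := lovasz_aff HL.
have Hm1 : phi (-1) <= 0 by rewrite -p0; apply: Hp => //; rewrite lerN10.
have f0 : f zerov = L zerov by rewrite Hf // compv_zero.
have fA : forall B, f (negind B) = L zerov + (- phi (-1)) * (L (negind B) - L zerov).
  by move=> B; rewrite (Hf _ (in_negind B)) compv_neg // L_scal.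
have hne : phi (-1) != 0.
  apply/eqP => E; apply: HA; by rewrite /zeroed fA f0 E oppr0 mul0r addr0 subrr.
have hr : 0 < - phi (-1) by rewrite oppr_gt0 lt_def eq_sym hne Hm1.
have hr0 : - phi (-1) != 0 by rewrite gt_eqF.
exists (fun v => phi v / - phi (-1)); split; [|split; [|split]].
- by move=> a b Ha Hb hab; rewrite ler_pM2r ?invr_gt0 //; apply: Hp.
- by rewrite p0 mul0r.
- by rewrite -{1}(opprK (phi (-1))) mulNr divff.
exists (fun v => L (scalev (- phi (-1)) v)); split; [|split].
- apply: aff_lovasz => s; have [a [c Hc]] := cL s.
  exists (fun i => a i * - phi (-1)), c => x Hx; rewrite Hc; last first.
    by move=> i j hij; rewrite /scalev ler_wpM2l ?Hx // ltW.
  by congr (_ + _); apply: eq_bigr => i _; rewrite /scalev mulrA.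
- by move=> B; rewrite (Hf _ (in_negind B)) compv_neg // scal_neg.
- move=> x Hx; rewrite Hf //; congr L; apply: functional_extensionality => i.
  by rewrite /scalev /compv mulrC divfK.
Qed.

Lemma ii'_iii : inv_hmaxdiff I f /\ weakly_homogeneous I (zeroed f) ->
  exists phi : R -> R,
      nondecr_on I phi /\ phi 0 = 0 /\ phi (-1) = -1 /\
      exists L : vec -> R,
        is_lovasz L /\ (forall A : {set 'I_n}, L (negind A) = f (negind A)) /\
        forall x, in_In I x -> f x = L (compv phi x).
Proof.
move=> [Hf Hwh]; have [A HA] := nz_lemma Hf Hwh.
case: Hwh => [phi [Hp [p0 Hw]]].
have pm1 : phi (-1) = -1.
  have E := Hw (-1) A hIm1.
  have Hs : scalev (-1) (ind A) = negind A :> vec.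
    by apply: functional_extensionality => i; rewrite /scalev /negind mulN1r.
  rewrite Hs in E.
  move: E; set z := zeroed f (negind A) => E.
  have hz : z != 0 by apply/eqP.
  have : (- phi (-1)) * z = 1 * z by rewrite mul1r -E.
  by move/(mulIf hz) => H1; rewrite -[phi (-1)]opprK H1.
exists phi; split => //; split => //; split => //.
have [L [cL HLA]] := lovasz_exists (fun B => f (negind B)).
exists L; split; first exact: aff_lovasz.
split => // x Hx.
have L0 : L zerov = f zerov by rewrite -negind0 HLA.
suff : (fun x => f x - L (compv phi x)) x = 0.
  by move/eqP; rewrite subr_eq0 => /eqP.
apply: (recon (h := fun x => f x - L (compv phi x)) _ _ Hx).
  by apply: ihmd_diff => //; apply: cm_ihmd; apply: cm_comp.
move=> t B Ht /=.
have hpt : phi t <= 0 by rewrite -p0; apply: Hp => //; exact: hI2.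
rewrite compv_scal // (L_scal (L:=L)) // L0 HLA.
have W := Hw t B Ht; rewrite /zeroed in W.
by rewrite -W [f zerov + _]addrC subrK subrr.
Qed.

Lemma main_equiv :
  let i_ := quasi_lovasz I f /\
            exists A : {set 'I_n}, zeroed f (negind A) <> 0 in
  let ii_ := comon_modular I f /\ weakly_homogeneous I (zeroed f) in
  let ii'_ := inv_hmaxdiff I f /\ weakly_homogeneous I (zeroed f) in
  let iii_ := exists phi : R -> R,
      nondecr_on I phi /\ phi 0 = 0 /\ phi (-1) = -1 /\
      exists L : vec -> R,
        is_lovasz L /\ (forall A : {set 'I_n}, L (negind A) = f (negind A)) /\
        forall x, in_In I x -> f x = L (compv phi x) in
  (i_ <-> ii_) /\ (i_ <-> ii'_) /\ (i_ <-> iii_).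
Proof.
move=> i_ ii_ ii'_ iii_.
have i3 : i_ -> iii_ := i_iii.
have iii_core : iii_ -> ii_.
  move=> [phi [Hp [p0 [_ [L [HL [HLA Hf]]]]]]]; exact: (core Hp p0 HL HLA Hf).
have ii_ii' : ii_ -> ii'_ by case=> cm wh; split => //; exact: cm_ihmd.
have ii'3 : ii'_ -> iii_ := ii'_iii.
have iii_i : iii_ -> i_.
  move=> H; have [cm wh] := iii_core H; split; last exact: nz_lemma (cm_ihmd cm) wh.
  case: H => [phi [Hp [p0 [_ [L [HL [HLA Hf]]]]]]].
  by exists L, phi.
tauto.
Qed.
End Main.

Theorem theorem16 (R : realFieldType) (n : nat) (I : R -> Prop)
  (f : vec R n -> R)
  (hI : is_interval I)
  (hI1 : forall x : R, -1 <= x -> x <= 0 -> I x)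
  (hI2 : forall x : R, I x -> x <= 0)
  (hf : nonconstant_on I f) :
  let i_ := quasi_lovasz I f /\
            exists A : {set 'I_n}, zeroed f (negind A) <> 0 in
  let ii_ := comon_modular I f /\ weakly_homogeneous I (zeroed f) in
  let ii'_ := inv_hmaxdiff I f /\ weakly_homogeneous I (zeroed f) in
  let iii_ := exists phi : R -> R,
      nondecr_on I phi /\ phi 0 = 0 /\ phi (-1) = -1 /\
      exists L : vec R n -> R,
        is_lovasz L /\ (forall A : {set 'I_n}, L (negind A) = f (negind A)) /\
        forall x, in_In I x -> f x = L (compv phi x) in
  (i_ <-> ii_) /\ (i_ <-> ii'_) /\ (i_ <-> iii_).
Proof.
have hI0 : I 0 by apply: hI1; rewrite ?lerN10 ?lexx.
have hIm1 : I (-1) by apply: hI1; rewrite ?lerN10 ?lexx.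
exact: (main_equiv hI0 hIm1 hI2 hf).
Qed.
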